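(* Let $R$ be a commutative domain with field of fractions $F$, let $A=(a_{i,j})\in R^{n\times m}$ have rank $r$, and let $k$ be an integer with $0\le k<r$ such that $\alpha^i\neq 0$ for $i=k,k+1,\dots,r$. Let $s,p$ be integers with $k<s\le n$ and $k<p\le m$. Define $L^k_s=(\alpha^j_{i,j})$ with $i=k+1,\dots,s$, $j=k+1,\dots,r$ (an $(s-k)\times(r-k)$ lower triangular matrix), $U^k_p=(\alpha^i_{i,j})$ with $i=k+1,\dots,r$, $j=k+1,\dots,p$ (an $(r-k)\times(p-k)$ upper triangular matrix), and the $(r-k)\times(r-k)$ diagonal matrix $D^k_{s,p}=\mathrm{diag}\big(\alpha^k(\alpha^{i-1}\alpha^{i})^{-1}\big)_{i=k+1,\dots,r}$ over $F$. Then $$\mathcal A^k_{s,p}=L^k_s\,D^k_{s,p}\,U^k_p,$$ i.e. for all $k<i\le s$, $k<j\le p$: $\alpha^{k+1}_{i,j}=\sum_{l=k+1}^{r}\alpha^l_{i,l}\,\alpha^k(\alpha^{l-1}\alpha^l)^{-1}\,\alpha^l_{l,j}$.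
   Context: For a matrix $A=(a_{i,j})\in R^{n\times m}$ and integers $k\ge1$, $1\le i\le n$, $1\le j\le m$, $\alpha^k_{i,j}$ denotes the $k\times k$ minor of $A$ formed by rows $1,2,\dots,k-1,i$ and columns $1,2,\dots,k-1,j$ (so it is $0$ if $i<k$ or $j<k$, because of a repeated row or column). Set $\alpha^0=1$ and $\alpha^k=\alpha^k_{k,k}$ (the $k$-th leading principal minor). For $0\le k<s\le n$ and $k<p\le m$, $\mathcal A^k_{s,p}$ denotes the $(s-k)\times(p-k)$ matrix $(\alpha^{k+1}_{i,j})_{i=k+1,\dots,s;\ j=k+1,\dots,p}$; in particular $\mathcal A^0_{n,m}=A$. *)

(* Defs.v *)
From HB Require Import structures.
From mathcomp Require Import all_boot all_order all_algebra.
Set Implicit Arguments. Unset Strict Implicit. Unset Printing Implicit Defensive.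
Import Order.TTheory GRing.Theory Num.Theory.
Local Open Scope ring_scope.

Section Minors.
Variables (R : idomainType) (n m : nat) (A : 'M[R]_(n, m)).

(* entry with 0-indexed nat indices, 0 outside the matrix (never used there) *)
Definition entry (i j : nat) : R :=
  match insub i, insub j with
  | Some i', Some j' => A i' j'
  | _, _ => 0
  end.

(* alpha^k_{i,j} with 1-indexed i, j: the k x k minor on rows 1..k-1,i and
   columns 1..k-1,j.  For k = 0 this is the empty determinant, i.e. 1. *)
Definition alpha (k i j : nat) : R :=
  \det (\matrix_(a < k, b < k)
          entry (if (a < k.-1)%N then nat_of_ord a else i.-1)
                (if (b < k.-1)%N then nat_of_ord b else j.-1)).

Definition lpm (k : nat) : R := alpha k k k.

Local Notation F := {fraction R}.
Local Notation "x %:F" := (@tofrac R x).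

Definition calA (k s p : nat) : 'M[F]_(s - k, p - k) :=
  \matrix_(a < s - k, b < p - k) (alpha k.+1 (k.+1 + a) (k.+1 + b))%:F.

Definition Lmx (k s r : nat) : 'M[F]_(s - k, r - k) :=
  \matrix_(a < s - k, b < r - k) (alpha (k.+1 + b) (k.+1 + a) (k.+1 + b))%:F.

Definition Umx (k p r : nat) : 'M[F]_(r - k, p - k) :=
  \matrix_(a < r - k, b < p - k) (alpha (k.+1 + a) (k.+1 + a) (k.+1 + b))%:F.

Definition Dmx (k r : nat) : 'M[F]_(r - k) :=
  diag_mx (\row_(a < r - k)
             ((lpm k)%:F / ((lpm (k + a))%:F * (lpm (k.+1 + a))%:F))).

End Minors.

(* Main.v *)
Require Import Defs.
From HB Require Import structures.
From mathcomp Require Import all_boot all_order all_algebra.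
From mathcomp Require Import ring zify.
Set Implicit Arguments. Unset Strict Implicit. Unset Printing Implicit Defensive.
Import Order.TTheory GRing.Theory Num.Theory.
Local Open Scope ring_scope.

Lemma det_size_eq (K : comNzRingType) N1 N2 (E : nat -> nat -> K) : N1 = N2 ->
  \det (\matrix_(a < N1, b < N1) E a b) = \det (\matrix_(a < N2, b < N2) E a b).
Proof. by move=> ->. Qed.

Lemma bordered (K : fieldType) u q (E : nat -> nat -> K) :
  (\matrix_(c < u, d < u) E c d) \in unitmx ->
  \det (\matrix_(a < (u + q)%N, b < (u + q)%N) E a b) =
  \det (\matrix_(c < u, d < u) E c d) *
  \det (\matrix_(x < q, y < q) E (u + x)%N (u + y)%N
        - (\matrix_(x < q, c < u) E (u + x)%N c) *m invmx (\matrix_(c < u, d < u) E c d)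
           *m (\matrix_(c < u, y < q) E c (u + y)%N)).
Proof.
set P := \matrix_(c < u, d < u) E c d.
set U := \matrix_(c < u, y < q) E c (u + y)%N.
set V := \matrix_(x < q, c < u) E (u + x)%N c.
set W := \matrix_(x < q, y < q) E (u + x)%N (u + y)%N.
move=> Pu.
have -> : \matrix_(a < (u + q)%N, b < (u + q)%N) E a b = block_mx P U V W.
  rewrite -[LHS]submxK; congr block_mx; apply/matrixP=> i j; rewrite !mxE //.
have -> : block_mx P U V W = block_mx 1%:M 0 (V *m invmx P) 1%:M *m
    block_mx P U 0 (W - V *m invmx P *m U).
  rewrite mulmx_block !mul1mx !mul0mx ?mulmx0 ?addr0 ?add0r -mulmxA mulVmx // mulmx1.
  by rewrite addrC subrK.
by rewrite det_mulmx det_lblock det_ublock !det1 !mul1r.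
Qed.

Lemma det2 (K : comNzRingType) (M : 'M[K]_2) : \det M = M 0 0 * M 1 1 - M 0 1 * M 1 0.
Proof.
rewrite (expand_det_row _ 0) !big_ord_recr big_ord0 /= add0r /cofactor !det_mx11 !mxE /=.
rewrite expr0 expr1 mul1r mulN1r.
have -> : lift 0 0 = 1 :> 'I_2 by apply/val_inj.
have -> : lift (ord_max : 'I_2) 0 = 0 :> 'I_2 by apply/val_inj.
have -> : widen_ord (leqnSn 1) ord_max = 0 :> 'I_2 by apply/val_inj.
have -> : lift 0 0 = 1 :> 'I_2 by apply/val_inj.
have -> : ord_max = 1 :> 'I_2 by apply/val_inj.
by rewrite mulrN.
Qed.

Definition aF (R : idomainType) n m (A : 'M[R]_(n, m)) (x y : nat) : {fraction R} :=
  tofrac (entry A x y).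
Definition Pm (R : idomainType) n m (A : 'M[R]_(n, m)) u : 'M[{fraction R}]_u :=
  \matrix_(c < u, d < u) aF A c d.
Definition G (R : idomainType) n m (A : 'M[R]_(n, m)) u x y : {fraction R} :=
  aF A x y - \sum_(c < u) (\sum_(d < u) aF A x d * invmx (Pm A u) d c) * aF A c y.

Lemma alphaF (R : idomainType) n m (A : 'M[R]_(n, m)) k i j :
  tofrac (alpha A k i j) = \det (\matrix_(a < k, b < k)
     aF A (if (a < k.-1)%N then nat_of_ord a else i.-1)
          (if (b < k.-1)%N then nat_of_ord b else j.-1)).
Proof.
rewrite /alpha -det_map_mx; congr (\det _); apply/matrixP=> a b; by rewrite !mxE.
Qed.

Lemma lpmF (R : idomainType) n m (A : 'M[R]_(n, m)) u :
  tofrac (lpm A u) = \det (Pm A u).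
Proof.
rewrite /lpm alphaF; congr (\det _); apply/matrixP=> a b; rewrite !mxE.
have H : forall c : 'I_u, (if (c < u.-1)%N then nat_of_ord c else u.-1) = c.
  move=> c; case: ifP => // h; have := ltn_ord c; move/negbT: h; lia.
by rewrite !H.
Qed.

Lemma P_eq (R : idomainType) n m (A : 'M[R]_(n, m)) u (rho gam : nat -> nat) :
  (forall a, (a < u)%N -> rho a = a) -> (forall b, (b < u)%N -> gam b = b) ->
  \matrix_(c < u, d < u) aF A (rho c) (gam d) = Pm A u.
Proof. by move=> hr hg; apply/matrixP=> c d; rewrite !mxE hr ?hg. Qed.

Lemma schur_entry (R : idomainType) n m (A : 'M[R]_(n, m)) u q (rho gam : nat -> nat)
  (x y : 'I_q) :
  (forall a, (a < u)%N -> rho a = a) -> (forall b, (b < u)%N -> gam b = b) ->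
  (\matrix_(x < q, y < q) aF A (rho (u + x)%N) (gam (u + y)%N)
   - (\matrix_(x < q, c < u) aF A (rho (u + x)%N) (gam c)) *m
       invmx (\matrix_(c < u, d < u) aF A (rho c) (gam d)) *m
       (\matrix_(c < u, y < q) aF A (rho c) (gam (u + y)%N))) x y
  = G A u (rho (u + x)%N) (gam (u + y)%N).
Proof.
move=> hr hg; rewrite (P_eq A hr hg) !mxE /G; congr (_ - _).
apply: eq_bigr => c _; rewrite !mxE hr //; congr (_ * _).
by apply: eq_bigr => d _; rewrite !mxE hg.
Qed.

Lemma bordA (R : idomainType) n m (A : 'M[R]_(n, m)) u q (rho gam : nat -> nat) :
  (forall a, (a < u)%N -> rho a = a) -> (forall b, (b < u)%N -> gam b = b) ->
  lpm A u != 0 ->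
  \det (\matrix_(a < (u + q)%N, b < (u + q)%N) aF A (rho a) (gam b)) =
  tofrac (lpm A u) * \det (\matrix_(x < q, y < q) G A u (rho (u + x)%N) (gam (u + y)%N)).
Proof.
move=> hr hg hl.
rewrite (@bordered _ u q (fun a b => aF A (rho a) (gam b))); last first.
  by rewrite (P_eq A hr hg) unitmxE unitfE -lpmF tofrac_eq0.
congr (_ * _); first by rewrite (P_eq A hr hg) lpmF.
by congr (\det _); apply/matrixP=> x y; rewrite schur_entry // mxE.
Qed.

Lemma Lalpha (R : idomainType) n m (A : 'M[R]_(n, m)) u i j :
  lpm A u != 0 -> tofrac (alpha A u.+1 i j) = tofrac (lpm A u) * G A u i.-1 j.-1.
Proof.
move=> hl; rewrite alphaF.
rewrite (@det_size_eq _ _ _ (fun a b => aF A (if (a < u)%N then a else i.-1)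
   (if (b < u)%N then b else j.-1)) (esym (addn1 u))).
rewrite (@bordA _ _ _ A u 1 (fun a => if (a < u)%N then a else i.-1)
               (fun a => if (a < u)%N then a else j.-1)) //;
  try by move=> a ->.
by rewrite det_mx11 mxE /= addn0 ltnn.
Qed.

Lemma L2alpha (R : idomainType) n m (A : 'M[R]_(n, m)) u i j :
  lpm A u != 0 -> tofrac (alpha A u.+2 i j) = tofrac (lpm A u) *
    (G A u u u * G A u i.-1 j.-1 - G A u u j.-1 * G A u i.-1 u).
Proof.
move=> hl; rewrite alphaF.
rewrite (@det_size_eq _ _ _ (fun a b => aF A (if (a < u.+1)%N then a else i.-1)
   (if (b < u.+1)%N then b else j.-1)) (esym (addn2 u))).
rewrite (@bordA _ _ _ A u 2 (fun a => if (a < u.+1)%N then a else i.-1)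
               (fun a => if (a < u.+1)%N then a else j.-1)) //;
  try by move=> a h; rewrite ltnS ltnW.
by rewrite det2 !mxE /= addn0 addn1 ltnSn ltnn.
Qed.

Lemma Grec (R : idomainType) n m (A : 'M[R]_(n, m)) u x y :
  lpm A u != 0 -> lpm A u.+1 != 0 ->
  G A u.+1 x y = G A u x y - G A u x u * G A u u y / G A u u u.
Proof.
move=> h0 h1.
have e1 := Lalpha x.+1 y.+1 h1.
have e2 := L2alpha x.+1 y.+1 h0.
have e3 : tofrac (lpm A u.+1) = tofrac (lpm A u) * G A u u u := Lalpha u.+1 u.+1 h0.
rewrite e2 e3 /= in e1.
have l0 : tofrac (lpm A u) != 0 by rewrite tofrac_eq0.
have g0 : G A u u u != 0.
  by apply: contra h1; rewrite -tofrac_eq0 e3 => /eqP ->; rewrite mulr0.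
rewrite -mulrA in e1; have e4 := mulfI l0 e1.
apply: (mulfI g0); rewrite -e4; field; exact: g0.
Qed.

Lemma entry_ord (R : idomainType) n m (A : 'M[R]_(n, m)) (i : 'I_n) (j : 'I_m) :
  aF A i j = tofrac (A i j).
Proof. by rewrite /aF /entry !valK. Qed.

Lemma ordfP n r x (H : (r <= n)%N) (Hx : (x < n)%N) (a : 'I_r.+1) :
  ((if (a < r)%N then nat_of_ord a else x) < n)%N.
Proof. by case: ifP => // h; apply: leq_trans h H. Qed.

Lemma Gzero (R : idomainType) n m (A : 'M[R]_(n, m)) r x y :
  \rank (map_mx (@tofrac R) A) = r -> lpm A r != 0 -> (x < n)%N -> (y < m)%N ->
  G A r x y = 0.
Proof.
move=> hr hl hx hy.
have rn : (r <= n)%N by rewrite -hr rank_leq_row.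
have rm : (r <= m)%N by rewrite -hr rank_leq_col.
have := Lalpha x.+1 y.+1 hl; rewrite /= alphaF /=.
set M := \matrix_(a, b) _.
have -> : M = rowsub (fun a => Ordinal (ordfP rn hx a))
     (colsub (fun b => Ordinal (ordfP rm hy b)) (map_mx (@tofrac R) A)).
  by apply/matrixP=> a b; rewrite !mxE -entry_ord.
have -> : \det (rowsub (fun a => Ordinal (ordfP rn hx a))
     (colsub (fun b => Ordinal (ordfP rm hy b)) (map_mx (@tofrac R) A))) = 0.
  apply/eqP; apply: contraT => hd.
  have hu : rowsub (fun a => Ordinal (ordfP rn hx a))
     (colsub (fun b => Ordinal (ordfP rm hy b)) (map_mx (@tofrac R) A)) \in unitmx.
    by rewrite unitmxE unitfE.
  have := mxrank_unit hu.
  set B := colsub _ _.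
  have h1 := mxrankS (rowsub_sub (fun a => Ordinal (ordfP rn hx a)) B).
  have h2 : (\rank B <= r)%N.
    have -> : B = (rowsub (fun b => Ordinal (ordfP rm hy b)) (map_mx (@tofrac R) A)^T)^T.
      by apply/matrixP=> a b; rewrite !mxE.
    rewrite mxrank_tr; apply: leq_trans (mxrankS (rowsub_sub _ _)) _.
    by rewrite mxrank_tr hr.
  move=> e; move: (leq_trans h1 h2); rewrite e ltnn //.
move/esym/eqP; rewrite mulf_eq0 tofrac_eq0 (negbTE hl) /= => /eqP //.
Qed.

Lemma tele (R : idomainType) n m (A : 'M[R]_(n, m)) k r x y :
  (forall i, (k <= i <= r)%N -> lpm A i != 0) ->
  forall d, (k + d <= r)%N ->
  G A k x y = \sum_(c < d) (G A (k + c) x (k + c) * G A (k + c) (k + c) y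
                            / G A (k + c) (k + c) (k + c)) + G A (k + d) x y.
Proof.
move=> hl; elim=> [|d IH] hd; first by rewrite big_ord0 add0r addn0.
rewrite IH; last by lia.
rewrite big_ord_recr /= addnS (Grec x y); first by rewrite -addrA; congr (_ + _); rewrite addrC subrK.
  by apply: hl; lia.
by apply: hl; lia.
Qed.

Lemma fld (K : fieldType) (l g u1 u2 l1 : K) : l != 0 -> g != 0 ->
  l1 * (u1 * u2 / g) = l * u1 * (l1 / (l * (l * g))) * (l * u2).
Proof. move=> hl hg. field. by rewrite hl hg. Qed.

Theorem theorem2 (R : idomainType) (n m : nat) (A : 'M[R]_(n, m))
    (r k s p : nat) :
  \rank (map_mx (@tofrac R) A) = r ->
  (k < r)%N ->
  (forall i, (k <= i <= r)%N -> lpm A i != 0) ->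
  (k < s <= n)%N -> (k < p <= m)%N ->
  calA A k s p = Lmx A k s r *m Dmx A k r *m Umx A k p r.
Proof.
move=> hr hkr hl /andP[hks hsn] /andP[hkp hpm].
apply/matrixP=> a b; rewrite mul_mx_diag !mxE.
have hk : lpm A k != 0 by apply: hl; rewrite leqnn ltnW.
rewrite !addSn (Lalpha _ _ hk) /=.
rewrite (tele _ _ hl (d := r - k)); last by lia.
rewrite subnKC ?(ltnW hkr) // Gzero ?addr0 //; last 2 first.
- by have := ltn_ord a; lia.
- by have := ltn_ord b; lia.
rewrite big_distrr /=; apply: eq_bigr => c _; rewrite !mxE !addSn.
have hc : lpm A (k + c) != 0 by apply: hl; have := ltn_ord c; lia.
have hc1 : lpm A (k + c).+1 != 0 by apply: hl; have := ltn_ord c; lia.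
have e3 : tofrac (lpm A (k + c).+1) = tofrac (lpm A (k + c)) * G A (k + c) (k + c) (k + c)
  := Lalpha _ _ hc.
rewrite !(Lalpha _ _ hc) /=.
have l0 : tofrac (lpm A (k + c)) != 0 by rewrite tofrac_eq0.
have g0 : G A (k + c) (k + c) (k + c) != 0.
  by apply: contra hc1; rewrite -tofrac_eq0 e3 => /eqP ->; rewrite mulr0.
move: l0 g0.
move: (tofrac (lpm A (k + c))) (G A (k + c) (k + c) (k + c))
  (G A (k + c) (k + a) (k + c)) (G A (k + c) (k + c) (k + b)) (tofrac (lpm A k)).
by move=> l g u1 u2 l1 hl0 hg0; apply: fld.
by apply: hl; rewrite leqnn (ltnW hkr).
Qed.
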